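(* Let $f:\mathbb{R}^n_{>0}\to\mathbb{R}^n_{>0}$ be order-preserving, homogeneous, real analytic, and multiplicatively convex. Then $\mathcal{G}(f)=\mathcal{G}(f'(x))$ for every $x\in\mathbb{R}^n_{>0}$.
   Context: Entrywise order. Order-preserving: $x\le y\Rightarrow f(x)\le f(y)$; homogeneous: $f(tx)=tf(x)$ for $t>0$; real analytic: each entry real analytic on $\mathbb{R}^n_{>0}$; multiplicatively convex: each entry of $\log\circ f\circ\exp$ is convex. $\mathcal{G}(f)$ is the directed graph on $[n]=\{1,\dots,n\}$ with an arc $i\to j$ when $\lim_{t\to\infty}f(\exp(te_{\{j\}}))_i=\infty$ ($e_{\{j\}}$ the $j$-th standard basis vector). For a nonnegative matrix $A=[a_{ij}]$ (here the Jacobian $f'(x)$), $\mathcal{G}(A)$ is the directed graph on $[n]$ with an arc $i\to j$ when $a_{ij}\ne0$. *)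

(* Defs.v *)
From mathcomp Require Import all_boot all_order all_algebra.
From mathcomp Require Import all_classical all_reals all_analysis.
Set Implicit Arguments. Unset Strict Implicit. Unset Printing Implicit Defensive.
Import Order.TTheory GRing.Theory Num.Theory.
Import numFieldNormedType.Exports.
Local Open Scope classical_set_scope.
Local Open Scope ring_scope.

Section Defs.
Variables (R : realType) (n : nat).
Notation vec := ('I_n -> R).

Definition pos_vec (x : vec) : Prop := forall i, 0 < x i.

Definition vle (x y : vec) : Prop := forall i, x i <= y i.

Definition order_preserving (f : vec -> vec) : Prop :=
  forall x y, pos_vec x -> pos_vec y -> vle x y -> vle (f x) (f y).

Definition homogeneous (f : vec -> vec) : Prop :=
  forall (t : R) x, 0 < t -> pos_vec x -> f (fun k => t * x k) = (fun k => t * f x k).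

(* each entry of log o f o exp is convex on R^n *)
Definition mult_convex (f : vec -> vec) : Prop :=
  forall i (u v : vec) (l : R), 0 <= l <= 1 ->
    ln (f (fun k => expR (l * u k + (1 - l) * v k)) i)
      <= l * ln (f (fun k => expR (u k)) i) + (1 - l) * ln (f (fun k => expR (v k)) i).

(* degree-<= N partial sum of the multivariate power series with
   coefficients c, at increment h:  sum_{|a| <= N} c_a h^a *)
Definition pser_partial (c : ('I_n -> nat) -> R) (h : vec) (N : nat) : R :=
  \sum_(a : {ffun 'I_n -> 'I_N.+1} | (\sum_k (a k : nat) <= N)%N)
     c (fun k => (a k : nat)) * \prod_k h k ^+ (a k).

Definition pser_abs_partial (c : ('I_n -> nat) -> R) (h : vec) (N : nat) : R :=
  \sum_(a : {ffun 'I_n -> 'I_N.+1} | (\sum_k (a k : nat) <= N)%N)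
     `|c (fun k => (a k : nat))| * \prod_k `|h k| ^+ (a k).

(* g is real analytic at x (relative to the positive cone): on a
   neighbourhood of x it is the sum of an absolutely convergent power series
   centred at x *)
Definition real_analytic_at (g : vec -> R) (x : vec) : Prop :=
  exists2 r : R, 0 < r &
  exists c : ('I_n -> nat) -> R,
    forall y : vec, pos_vec y -> (forall k, `|y k - x k| < r) ->
      (exists M : R, forall N, pser_abs_partial c (fun k => y k - x k) N <= M) /\
      (pser_partial c (fun k => y k - x k) N @[N --> \oo] --> g y).

Definition real_analytic (f : vec -> vec) : Prop :=
  forall i x, pos_vec x -> real_analytic_at (fun y => f y i) x.

Definition exp_unit (j : 'I_n) (t : R) : vec :=
  fun k => if k == j then expR t else 1.

Definition arcG (f : vec -> vec) (i j : 'I_n) : Prop :=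
  f (exp_unit j t) i @[t --> +oo] --> +oo.

Definition jacobian (f : vec -> vec) (x : vec) (i j : 'I_n) : R :=
  derive1 (fun t : R => f (fun k => x k + (if k == j then t else 0)) i) 0.

Definition arcJ (f : vec -> vec) (x : vec) (i j : 'I_n) : Prop :=
  jacobian f x i j != 0.

End Defs.

(* Main.v *)
Require Import Defs.
From mathcomp Require Import all_boot all_order all_algebra.
From mathcomp Require Import all_classical all_reals all_analysis.
From mathcomp Require Import ring lra.
Import Order.TTheory GRing.Theory Num.Theory.
Import numFieldNormedType.Exports.
Local Open Scope ring_scope.

Section Gen.
Variable R : realType.

Lemma le0_small (a B e : R) : 0 < e -> (forall h, 0 < h < e -> a <= B * h) -> a <= 0.
Proof.
move=> e0 H; rewrite leNgt; apply/negP => a0.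
set h := Num.min (e / 2) (a / (2 * (`|B| + 1))).
have B1 : 0 < `|B| + 1 by rewrite ltr_wpDl.
have h0 : 0 < h by rewrite lt_min !divr_gt0 // mulr_gt0.
have he : h < e by rewrite /h gt_min; apply/orP; left; rewrite ltr_pdivrMr // ltr_pMr // ltr1n.
have H1 := H h; rewrite h0 he in H1; have {}H1 := H1 isT.
have h2 : h <= a / (2 * (`|B| + 1)) by rewrite /h ge_min lexx orbT.
have h3 : (`|B| + 1) * h <= a / 2.
  rewrite -ler_pdivlMl //; apply: (le_trans h2); rewrite invfM; rewrite le_eqVlt; apply/orP; left; apply/eqP; field; lra.

have h4 : B * h <= (`|B| + 1) * h by rewrite ler_pM2r // (le_trans (ler_norm B)) // lerDl.
have : a <= a / 2 by rewrite (le_trans H1) // (le_trans h4).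
lra.
Qed.

Lemma eq0_small (a B e : R) : 0 < e -> (forall h, 0 < h < e -> `|a| <= B * h) -> a = 0.
Proof.
move=> e0 H; have := @le0_small _ _ _ e0 H; by rewrite normr_le0 => /eqP.
Qed.


Lemma ln_diff (a b : R) : 0 < a -> 0 < b -> ln a - ln b <= (a - b) / b.
Proof.
move=> a0 b0.
have e0 : 0 < b * expR ((a - b) / b) by rewrite mulr_gt0 ?expR_gt0.
have : a <= b * expR ((a - b) / b).
  apply: (le_trans _ (ler_wpM2l (ltW b0) (expR_ge1Dx ((a - b) / b)))).
  by rewrite mulrDr mulr1 mulrCA divff ?gt_eqF // mulr1 addrC subrK.
rewrite -ler_ln ?posrE // lnM ?posrE ?expR_gt0 // expRK.
by move=> H; rewrite lerBlDl.
Qed.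

Lemma expR_le (h : R) : 0 <= h -> h <= 1 / 2 -> expR h <= 1 + 2 * h.
Proof.
move=> h0 h1.
have E : expR h * expR (- h) = 1 by rewrite -expRD subrr expR0.
have H1 : 1 - h <= expR (- h) by have := expR_ge1Dx (- h).
have H2 : 1 <= (1 + 2 * h) * expR (- h).
  apply: (le_trans _ (ler_wpM2l _ H1)); last lra.
  have : 0 <= h * (1 - 2 * h) by apply: mulr_ge0 => //; lra.
  move=> H; nra.
have e0 : 0 < expR (- h) := expR_gt0 _.
rewrite -(ler_pM2r e0) E; exact: H2.
Qed.

End Gen.

Section Taylor.
Variable R : realType.
Local Open Scope classical_set_scope.

Lemma taylor (b : nat -> R) (rho M v h : R) (K : nat) :
  0 < rho -> (forall N, \sum_(m < N.+1) `|b m| * rho ^+ m <= M) -> `|h| <= rho ->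
  (fun N => \sum_(m < N.+1) b m * h ^+ m) @ \oo --> v ->
  `|v - \sum_(m < K.+1) b m * h ^+ m| <= M * (`|h| / rho) ^+ K.+1.
Proof.
move=> r0 HM hr Hc.
set P := fun N => \sum_(m < N.+1) b m * h ^+ m.
set q := `|h| / rho.
have q0 : 0 <= q by rewrite divr_ge0 // ltW.
have q1 : q <= 1 by rewrite ler_pdivrMr // mul1r.
have Hw : (fun N => `|P N - P K|) @ \oo --> `|v - P K|.
  apply: cvg_norm; apply: cvgB => //; exact: cvg_cst.
apply: (closed_cvg _ (@closed_le _ (M * q ^+ K.+1)) _ _ Hw).
near=> N.
have KN : (K <= N)%N by near: N; exact: nbhs_infty_ge.
rewrite /= /P -!(big_mkord xpredT (fun m => b m * h ^+ m)).
rewrite (big_cat_nat _ (n:=K.+1)) //= addrC addrK.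
apply: (le_trans (ler_norm_sum _ _ _)).
apply: (@le_trans _ _ (\sum_(K.+1 <= i < N.+1) (`|b i| * rho ^+ i) * q ^+ K.+1)).
  rewrite big_nat [X in _ <= X]big_nat; apply: ler_sum => m /andP[Km _].
  rewrite normrM normrX -mulrA ler_wpM2l //.
  have -> : `|h| = rho * q by rewrite /q mulrC divfK // gt_eqF.
  rewrite exprMn; apply: ler_wpM2l; [exact: exprn_ge0 (ltW r0) | exact: ler_wiXn2l].
rewrite -big_distrl /= ler_wpM2r ?exprn_ge0 //.
apply: (le_trans _ (HM N)); rewrite -(big_mkord xpredT (fun m => `|b m| * rho ^+ m)).
rewrite (big_cat_nat _ (n:=K.+1) (m:=0) (p:=N.+1)) //= lerDr.
by apply: sumr_ge0 => m _; rewrite mulr_ge0 ?exprn_ge0 // ltW.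
Unshelve. all: by end_near.
Qed.
End Taylor.

Section Line.
Variables (R : realType) (n : nat).

Lemma pser_line (c : ('I_n -> nat) -> R) (j : 'I_n) (h : R) N :
  pser_partial c (fun k => if k == j then h else 0) N =
  \sum_(m < N.+1) c (fun k => if k == j then (m : nat) else 0%N) * h ^+ m.
Proof.
rewrite /pser_partial.
rewrite (partition_big (fun a : {ffun 'I_n -> 'I_N.+1} => a j) xpredT) //=.
apply: eq_bigr => m _.
pose e : {ffun 'I_n -> 'I_N.+1} := [ffun k => if k == j then m else ord0].
have ej : e j = m by rewrite ffunE eqxx.
have ek : forall k, k != j -> e k = ord0 by move=> k kj; rewrite ffunE (negbTE kj).
have sume : (\sum_k (e k : nat) = m)%N.
  rewrite (bigD1 j) //= ej big1 ?addn0 // => k kj; by rewrite ek.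
rewrite (bigD1 e) /=; last by rewrite sume -ltnS ltn_ord ej eqxx.
rewrite [X in _ + X]big1 ?addr0.
  have -> : (fun k => (e k : nat)) = (fun k => if k == j then (m : nat) else 0%N).
    by apply: funext => k; case: (eqVneq k j) => [->|kj]; rewrite ?ej ?ek.
  congr (_ * _); rewrite (bigD1 j) //= eqxx ej big1 ?mulr1 // => k kj.
  by rewrite (negbTE kj) ek.
move=> a /andP[/andP[Pa /eqP ajm] ane].
case: (boolP [exists k, (k != j) && ((a k : nat) != 0%N)]) => [/existsP[k /andP[kj ak]] | /existsPn Hall].
  by rewrite (bigD1 k) //= (negbTE kj) expr0n (negbTE ak) mul0r mulr0.
exfalso; move/eqP: ane; apply; apply/ffunP => k.
case: (eqVneq k j) => [->|kj]; first by rewrite ej ajm.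
rewrite ek //; apply/val_inj => /=.
by have := Hall k; rewrite kj /= negbK => /eqP.
Qed.

Lemma pser_abs_line (c : ('I_n -> nat) -> R) (j : 'I_n) (h : R) N :
  pser_abs_partial c (fun k => if k == j then h else 0) N =
  \sum_(m < N.+1) `|c (fun k => if k == j then (m : nat) else 0%N)| * `|h| ^+ m.
Proof.
have -> : pser_abs_partial c (fun k => if k == j then h else 0) N =
   pser_partial (fun a => `|c a|) (fun k => if k == j then `|h| else 0) N.
  rewrite /pser_abs_partial /pser_partial; apply: eq_bigr => a _; congr (_ * _).
  by apply: eq_bigr => k _; case: ifP; rewrite ?normr0.
by rewrite pser_line.
Qed.
End Line.

Section Main.
Variables (R : realType) (n : nat) (f : ('I_n -> R) -> ('I_n -> R)).
Variable fpos : forall x, pos_vec x -> pos_vec (f x).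
Variable fop : order_preserving f.
Variable fhom : homogeneous f.
Variable fan : real_analytic f.
Variable fmc : mult_convex f.
Variables (x : 'I_n -> R) (xpos : pos_vec x) (i j : 'I_n).
Local Open Scope classical_set_scope.

Definition psi (s : R) := f (fun k => x k + (if k == j then s else 0)) i.
Definition G (t : R) := f (fun k => x k * expR (if k == j then t else 0)) i.

Lemma lineP s : - x j < s -> pos_vec (fun k => x k + (if k == j then s else 0)).
Proof.
move=> hs k; case: (eqVneq k j) => [->|_]; last by rewrite addr0 xpos.
by rewrite -subr_gt0 opprK addrC in hs.
Qed.

Lemma psi_pos s : - x j < s -> 0 < psi s.
Proof. by move=> hs; apply: fpos; apply: lineP. Qed.

Lemma psi_mono s s' : - x j < s -> s <= s' -> psi s <= psi s'.
Proof.
move=> hs ss'; apply: fop; try apply: lineP => //; first exact: (lt_le_trans hs).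
by move=> k; case: ifP => _; rewrite ?lerD2l.
Qed.

Lemma G_psi t : G t = psi (x j * (expR t - 1)).
Proof.
rewrite /G /psi; congr (f _ i); apply: funext => k.
case: (eqVneq k j) => [->|_]; last by rewrite expR0 mulr1 addr0.
by rewrite mulrBr mulr1 addrC subrK.
Qed.

Lemma xj0 : 0 < x j. Proof. exact: xpos. Qed.
Lemma xjn0 : x j != 0. Proof. by rewrite gt_eqF // xj0. Qed.

Lemma psi_G s : - x j < s -> psi s = G (ln (1 + s / x j)).
Proof.
move=> hs; rewrite G_psi lnK; last first.
  rewrite posrE -(divff xjn0) -mulrDl divr_gt0 ?xj0 //.
  by rewrite -subr_gt0 opprK addrC in hs.
by rewrite addrC addKr mulrC divfK // xjn0.
Qed.

Lemma G_pos t : 0 < G t.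
Proof.
rewrite G_psi; apply: psi_pos.
rewrite mulrBr mulr1 ltrBrDl subrr; by rewrite mulr_gt0 ?xj0 ?expR_gt0.
Qed.

Lemma G_mono t t' : t <= t' -> G t <= G t'.
Proof.
move=> tt; rewrite !G_psi; apply: psi_mono.
  rewrite mulrBr mulr1 ltrBrDl subrr; by rewrite mulr_gt0 ?xj0 ?expR_gt0.
apply: ler_wpM2l; [exact: ltW xj0 | by rewrite lerD2r ler_expR].
Qed.

Lemma Gconv t1 t2 l : 0 <= l <= 1 ->
  ln (G (l * t1 + (1 - l) * t2)) <= l * ln (G t1) + (1 - l) * ln (G t2).
Proof.
move=> hl.
have := fmc i (fun k => ln (x k) + (if k == j then t1 else 0))
              (fun k => ln (x k) + (if k == j then t2 else 0)) l hl.
have E : forall a, (fun k => expR (ln (x k) + (if k == j then a else 0))) =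
                 (fun k => x k * expR (if k == j then a else 0)).
  by move=> a; apply: funext => k; rewrite expRD lnK // posrE xpos.
have V : (fun k => expR (l * (ln (x k) + (if k == j then t1 else 0)) +
    (1 - l) * (ln (x k) + (if k == j then t2 else 0)))) =
    (fun k => x k * expR (if k == j then l * t1 + (1 - l) * t2 else 0)).
  apply: funext => k.
  have -> : l * (ln (x k) + (if k == j then t1 else 0)) +
    (1 - l) * (ln (x k) + (if k == j then t2 else 0)) =
    ln (x k) + (l * (if k == j then t1 else 0) + (1 - l) * (if k == j then t2 else 0)).
    ring.
  rewrite expRD lnK ?posrE ?xpos //.
  by case: ifP => _; rewrite ?mulr0 ?addr0.
rewrite (E t1).
rewrite (E t2).
rewrite V.
rewrite /G.
by [].
Qed.


Lemma psi_an s : - x j < s -> exists b : nat -> R, exists rho : R, exists M : R,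
  [/\ 0 < rho, rho < x j + s, (forall N, \sum_(m < N.+1) `|b m| * rho ^+ m <= M) &
   forall h, `|h| <= rho -> (fun N => \sum_(m < N.+1) b m * h ^+ m) @ \oo --> psi (s + h)].
Proof.
move=> hs.
have hp := lineP _ hs.
have [r r0 [c Hc]] := fan i _ hp.
have xs0 : 0 < x j + s by rewrite -subr_gt0 opprK addrC in hs.
set rho := Num.min r (x j + s) / 2.
have rho0 : 0 < rho by rewrite divr_gt0 // lt_min r0 xs0.
have rhom : rho < Num.min r (x j + s).
  by rewrite /rho ltr_pdivrMr // ltr_pMr ?lt_min ?r0 ?xs0 // ltr1n.
move: rhom; rewrite lt_min => /andP[rr rx].
have key : forall h, `|h| <= rho ->
   (exists M, forall N, \sum_(m < N.+1) `|c (fun k => if k == j then (m : nat) else 0%N)| * `|h| ^+ m <= M) /\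
   ((fun N => \sum_(m < N.+1) c (fun k => if k == j then (m : nat) else 0%N) * h ^+ m) @ \oo --> psi (s + h)).
  move=> h; rewrite ler_norml => /andP[h1 h2].
  have hy : - x j < s + h by lra.
  have E : (fun k => (x k + (if k == j then s + h else 0)) - (x k + (if k == j then s else 0))) =
           (fun k => if k == j then h else 0).
    by apply: funext => k; case: ifP => _; [ring | rewrite subrr].
  have hr : forall k, `|(x k + (if k == j then s + h else 0)) - (x k + (if k == j then s else 0))| < r.
    move=> k; rewrite (congr1 (fun g => g k) E) /=; case: ifP => _; last by rewrite normr0.
    rewrite ltr_norml; apply/andP; split; lra.
  have [[M HM] Hcv] := Hc _ (lineP _ hy) hr.
  rewrite E in HM Hcv; split; first by exists M => N; rewrite -pser_abs_line.
  by move: Hcv; rewrite (eq_cvg _ _ (fun N => pser_line _ _ c j h N)).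
have hrr : `|rho| <= rho by rewrite ger0_norm // ltW.
have [[M HM] _] := key rho hrr.
exists (fun m => c (fun k => if k == j then (m : nat) else 0%N)), rho, M; split => //.
  by move=> N; rewrite -(ger0_norm (ltW rho0)); exact: HM.
by move=> h hh; case: (key h hh).
Qed.


Lemma psi_tay s : - x j < s -> exists b : nat -> R, exists rho : R, exists M : R,
  [/\ 0 < rho, rho < x j + s,
   (forall h, `|h| <= rho -> (fun N => \sum_(m < N.+1) b m * h ^+ m) @ \oo --> psi (s + h)) &
   forall K h, `|h| <= rho ->
     `|psi (s + h) - \sum_(m < K.+1) b m * h ^+ m| <= M * (`|h| / rho) ^+ K.+1].
Proof.
move=> hs; have [b [rho [M [r0 rx HM Hc]]]] := psi_an s hs.
exists b, rho, M; split => // K h hh.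
exact: taylor r0 HM hh (Hc h hh).
Qed.

Lemma mx0 : - x j < 0. Proof. by rewrite oppr_lt0 xj0. Qed.

Lemma psi_d : exists rho : R, exists K : R, 0 < rho /\
  forall h, `|h| <= rho -> `|psi h - psi 0 - Defs.jacobian f x i j * h| <= K * `|h| ^+ 2.
Proof.
have [b [rho [M [r0 _ Hc Ht]]]] := psi_tay 0 mx0.
have b0 : b 0%N = psi 0.
  have := Ht 0%N 0 ltac:(by rewrite normr0 ltW).
  rewrite normr0 mul0r addr0 big_ord1 expr0 mulr1 expr1 mulr0 normr_le0 subr_eq0 => /eqP //.
set K := M / rho ^+ 2.
have T1 : forall h, `|h| <= rho -> `|psi h - psi 0 - b 1%N * h| <= K * `|h| ^+ 2.
  move=> h hh; have := Ht 1%N h hh; rewrite add0r big_ord_recr big_ord1 /= expr0 mulr1 expr1 b0.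
  rewrite opprD addrA expr_div_n /K mulrA mulrAC.
  by [].
have J : Defs.jacobian f x i j = b 1%N.
  rewrite /Defs.jacobian /derive1; apply: cvg_lim => //.
  apply/cvgrPdist_le => eps e0.
  have k0 : 0 < `|K| + 1 by rewrite ltr_wpDl.
  have d0 : 0 < Num.min rho (eps / (`|K| + 1)) by rewrite lt_min r0 divr_gt0.
  near=> h.
  have hn : h != 0 by near: h; exact: nbhs_dnbhs_neq.
  have hle : `|h| <= Num.min rho (eps / (`|K| + 1)) by near: h; exact: dnbhs0_le.
  move: hle; rewrite le_min => /andP[h1 h2].
  have := T1 h h1; rewrite addr0.
  set D := psi h - psi 0 - b 1%N * h => HD.
  have -> : b 1%N - h^-1 *: (psi h - psi 0) = - (h^-1 * D).
    by rewrite /D -[_ *: _]/(h^-1 * (psi h - psi 0)); field.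
  rewrite normrN normrM normfV.
  have a0 : 0 < `|h| by rewrite normr_gt0.
  rewrite ler_pdivrMl //.
  have h3 : `|h| * (`|K| + 1) <= eps by rewrite -ler_pdivlMr.
  have h4 : K <= `|K| + 1 by rewrite (le_trans (ler_norm K)) // lerDl.
  have h5 : 0 <= `|h| ^+ 2 by rewrite exprn_ge0 // ltW.
  have h6 : K * `|h| ^+ 2 <= (`|K| + 1) * `|h| ^+ 2 by rewrite ler_wpM2r.
  have h7 : (`|K| + 1) * `|h| ^+ 2 <= `|h| * eps.
    rewrite expr2 mulrA [(_ + 1) * _]mulrC -mulrA; apply: ler_wpM2l; [exact: ltW | by rewrite mulrC].
  exact: (le_trans HD (le_trans h6 h7)).
exists rho, K; split => // h hh; rewrite J; exact: T1.
Unshelve. all: by end_near.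
Qed.


Lemma G0psi : G 0 = psi 0.
Proof. by rewrite G_psi expR0 subrr mulr0. Qed.

Lemma step2a : Defs.jacobian f x i j != 0 -> exists t1, 0 < t1 /\ G 0 < G t1.
Proof.
move=> J; case: (pselect (exists t1, 0 < t1 /\ G 0 < G t1)) => // Hn.
exfalso; move/eqP: J; apply.
have [rho [K [r0 H]]] := psi_d.
apply: (@eq0_small _ _ K rho r0) => h /andP[h0 hr].
have hh : `|h| <= rho by rewrite ger0_norm ?ltW.
have Eq : psi h = psi 0.
  apply/eqP; rewrite eq_le (psi_mono _ _ mx0 (ltW h0)) andbT.
  rewrite (psi_G _ (lt_trans mx0 h0)).
  rewrite -G0psi leNgt; apply/negP => Hlt; apply: Hn; exists (ln (1 + h / x j)); split => //.
  by apply: ln_gt0; rewrite ltrDl divr_gt0 // xj0.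
have := H h hh; rewrite Eq subrr sub0r normrN normrM (ger0_norm (ltW h0)).
by rewrite expr2 mulrA ler_pM2r.
Qed.


Definition Ev (t : R) : 'I_n -> R := fun k => x k * expR (if k == j then t else 0).

Lemma Ev_pos t : pos_vec (Ev t).
Proof. by move=> k; rewrite /Ev mulr_gt0 ?xpos ?expR_gt0. Qed.

Lemma exp_unit_pos (t : R) : pos_vec (exp_unit j t).
Proof. by move=> k; rewrite /exp_unit; case: ifP => _; rewrite ?expR_gt0 ?ltr01. Qed.

Lemma scale_le (c t : R) : 0 < c -> vle (fun k => c * Ev t k) (exp_unit j t) ->
  c * G t <= f (exp_unit j t) i.
Proof.
move=> c0 hv.
have := fhom c (Ev t) c0 (Ev_pos t) => E.
have -> : G t = f (Ev t) i by [].
have := congr1 (fun g => g i) E => /= <-.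
apply: fop => //; last exact: exp_unit_pos.
by move=> k; rewrite mulr_gt0 ?Ev_pos.
Qed.

Lemma scale_ge (c t : R) : 0 < c -> vle (exp_unit j t) (fun k => c * Ev t k) ->
  f (exp_unit j t) i <= c * G t.
Proof.
move=> c0 hv.
have := fhom c (Ev t) c0 (Ev_pos t) => E.
have -> : G t = f (Ev t) i by [].
have := congr1 (fun g => g i) E => /= <-.
apply: fop => //; first exact: exp_unit_pos.
by move=> k; rewrite mulr_gt0 ?Ev_pos.
Qed.

Lemma lowerG : exists2 c : R, 0 < c & forall t, c * G t <= f (exp_unit j t) i.
Proof.
have S0 : 0 <= \sum_k x k by apply: sumr_ge0 => k _; exact: ltW.
have c0 : 0 < (1 + \sum_k x k)^-1 by rewrite invr_gt0 ltr_wpDr.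
exists (1 + \sum_k x k)^-1 => // t; apply: scale_le => // k.
have ck : (1 + \sum_k x k)^-1 * x k <= 1.
  rewrite mulrC ler_pdivrMr ?ltr_wpDr // mul1r.
  rewrite (bigD1 k) //= addrCA ler_wpDr //; apply: addr_ge0 => //.
  by apply: sumr_ge0 => l _; exact: ltW.
rewrite /Ev /exp_unit mulrA; case: ifP => _; last by rewrite expR0 mulr1.
by rewrite ler_piMl // ltW // expR_gt0.
Qed.

Lemma upperG : exists2 C : R, 0 < C & forall t, f (exp_unit j t) i <= C * G t.
Proof.
have S0 : 0 <= \sum_k (x k)^-1 by apply: sumr_ge0 => k _; rewrite invr_ge0 ltW.
have c0 : 0 < 1 + \sum_k (x k)^-1 by rewrite ltr_wpDr.
exists (1 + \sum_k (x k)^-1) => // t; apply: scale_ge => // k.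
have ck : 1 <= (1 + \sum_k (x k)^-1) * x k.
  rewrite -ler_pdivrMr ?xpos // mul1r.
  rewrite (bigD1 k) //= addrCA ler_wpDr //; apply: addr_ge0 => //.
  by apply: sumr_ge0 => l _; rewrite invr_ge0 ltW.
rewrite /Ev /exp_unit mulrA; case: ifP => _; last by rewrite expR0 mulr1.
by rewrite ler_peMl // ltW // expR_gt0.
Qed.

Lemma step2b t1 : 0 < t1 -> G 0 < G t1 -> arcG f i j.
Proof.
move=> t10 Gt1.
set g0 := ln (G 0); set a := ln (G t1).
have ag : g0 < a by rewrite /g0 /a ltr_ln ?posrE ?G_pos.
set d := (a - g0) / t1.
have d0 : 0 < d by rewrite divr_gt0 // subr_gt0.
have [c c0 Hc] := lowerG.
have G00 : 0 < G 0 := G_pos 0.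
have key : forall t, t1 <= t -> c * G 0 * d * t <= f (exp_unit j t) i.
  move=> t tt1; apply: le_trans (Hc t); rewrite -!mulrA ler_pM2l //.
  have t0 : 0 < t := lt_le_trans t10 tt1.
  set g := ln (G t).
  have l01 : 0 <= t1 / t <= 1.
    by apply/andP; split; [rewrite divr_ge0 // ltW | rewrite ler_pdivrMr // mul1r].
  have := Gconv t 0 (t1 / t) l01.
  have -> : t1 / t * t + (1 - t1 / t) * 0 = t1 by rewrite mulr0 addr0 divfK // gt_eqF.
  rewrite -/a -/g -/g0 => Hcv.
  have H1 : t * (a - g0) <= t1 * (g - g0).
    have : a - g0 <= t1 / t * (g - g0) by lra.
    move/(ler_wpM2l (ltW t0)); rewrite mulrA [t * (t1 / t)]mulrC divfK // gt_eqF //.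
  have H2 : g0 + t * d <= g.
    suff : t * d <= g - g0 by lra.
    by rewrite /d mulrA ler_pdivrMr // [_ * t1]mulrC.
  have H3 : G 0 * (1 + t * d) <= G t.
    rewrite -(lnK (G_pos t)) -/g -(lnK G00) -/g0.
    apply: (@le_trans _ _ (expR g0 * expR (t * d))).
      by rewrite ler_pM2l ?expR_gt0 // expR_ge1Dx.
    by rewrite -expRD ler_expR.
  apply: le_trans H3; have -> : (a - g0) * (t1^-1 * t) = t * d by rewrite /d; ring.
  rewrite ler_pM2l //; lra.
apply/cvgryPge => A; near=> t.
have tt1 : t1 <= t by near: t; apply: nbhs_pinfty_ge; exact: num_real.
have tA : A / (c * G 0 * d) <= t by near: t; apply: nbhs_pinfty_ge; exact: num_real.
apply: le_trans (key t tt1).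
have cd : 0 < c * G 0 * d by apply: mulr_gt0 => //; apply: mulr_gt0.
by move: tA; rewrite ler_pdivrMr // mulrC.
Unshelve. all: by end_near.
Qed.


Lemma step3a : Defs.jacobian f x i j = 0 -> forall t, t <= 0 -> G t = G 0.
Proof.
move=> J t t0.
have [rho [K [r0 H]]] := psi_d.
rewrite J in H.
apply/eqP; rewrite eq_le (G_mono _ _ t0) /=.
case: (eqVneq t 0) => [->|tn0]; first by [].
have tneg : t < 0 by rewrite lt_neqAle tn0.
have G00 := G_pos 0.
rewrite -ler_ln ?posrE ?G_pos //.
set g0 := ln (G 0); set gt := ln (G t).
set K2 := `|K| * (2 * x j) ^+ 2 / G 0.
set e0 := Num.min (1 / 2) (rho / (2 * x j)).
have e00 : 0 < e0 by rewrite lt_min divr_gt0 //= ?ltr01 ?ltr0n // divr_gt0 // mulr_gt0 ?xj0.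
suff : g0 - gt <= 0 by lra.
apply: (@le0_small _ _ (- t * K2) e0 e00) => h /andP[h0 he].
move: he; rewrite lt_min => /andP[h12 hr].
set s := x j * (expR h - 1).
have s0 : 0 <= s by apply: mulr_ge0; [exact: ltW xj0 | rewrite subr_ge0 -expR0 ler_expR ltW].
have s2 : s <= 2 * x j * h.
  rewrite /s [2 * x j]mulrC -mulrA; apply: ler_wpM2l; first exact: ltW xj0.
  by have := @expR_le _ h (ltW h0) (ltW h12); lra.
have sr : `|s| <= rho.
  rewrite ger0_norm //; apply: le_trans s2 _.
  by rewrite -ler_pdivlMl ?mulr_gt0 ?xj0 // mulrC ltW.
have Hs := H s sr; rewrite mul0r subr0 in Hs.
have HGh : ln (G h) - g0 <= K2 * h ^+ 2.
  apply: le_trans (@ln_diff _ _ _ (G_pos h) G00) _.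
  rewrite /K2 mulrAC ler_pM2r ?invr_gt0 //.
  rewrite G_psi -/s G0psi.
  apply: le_trans (ler_norm _) _; apply: le_trans Hs _.
  apply: le_trans (ler_wpM2r (exprn_ge0 _ (normr_ge0 _)) (ler_norm K)) _.
  rewrite -mulrA -exprMn; apply: ler_wpM2l => //.
  rewrite ger0_norm //; apply: lerXn2r; rewrite ?nnegrE //.
    by apply: mulr_ge0; [apply: mulr_ge0 => //; exact: ltW xj0 | exact: ltW].
set D := h - t.
have D0 : 0 < D by rewrite /D; lra.
set l := h / D.
have l01 : 0 <= l <= 1.
  apply/andP; split; first by rewrite divr_ge0 ?ltW.
  by rewrite ler_pdivrMr // mul1r /D; lra.
have := Gconv t h l l01.
have -> : l * t + (1 - l) * h = 0.
  by rewrite /l /D; field; apply/eqP; lra.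
rewrite -/g0 -/gt => Hc.
have oml : 1 - l = - t / D by rewrite /l /D; field; apply/eqP; lra.
have e1 : l * (g0 - gt) <= (1 - l) * (K2 * h ^+ 2).
  have : 0 <= 1 - l by lra.
  move=> H0; apply: le_trans (ler_wpM2l H0 HGh); lra.
move: e1; rewrite oml /l mulrAC [- t / D * _]mulrAC ler_pM2r ?invr_gt0 //.
have -> : - t * (K2 * h ^+ 2) = h * (- t * K2 * h) by rewrite expr2; ring.
by rewrite ler_pM2l.
Qed.


Lemma ident : (forall s, - x j < s -> s <= 0 -> psi s = psi 0) ->
  forall s, - x j < s -> psi s = psi 0.
Proof.
move=> H0 s1 hs1.
case: (lerP s1 0) => [s10 | s1pos]; first exact: H0.
case: (eqVneq (psi s1) (psi 0)) => // Hne; exfalso.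
set A := [set s | (0 <= s <= s1) /\ forall s', - x j < s' -> s' <= s -> psi s' = psi 0].
have A0 : A 0 by split; [rewrite lexx ltW | exact: H0].
have hA : has_sup A.
  split; first by exists 0.
  by exists s1 => y [/andP[_ ys1] _].
set S := sup A.
have S0 : 0 <= S by apply: sup_upper_bound.
have hS : - x j < S by apply: lt_le_trans mx0 S0.
have Hlt : forall s', - x j < s' -> s' < S -> psi s' = psi 0.
  move=> s' h1 h2.
  have sS : 0 < S - s' by rewrite subr_gt0.
  have [e [_ He] Hle] := @sup_adherent _ A (S - s') sS hA.
  apply: He => //; apply: ltW; move: Hle; rewrite -/S opprB addrC subrK //.
have [b [rho [M [r0 rx Hc Ht]]]] := psi_tay S hS.
have Hneg : forall h, - rho <= h -> h < 0 -> psi (S + h) = psi 0.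
  move=> h h1 h2; apply: Hlt; lra.
have sumE : forall (K : nat) (h : R), (forall m, (0 < m <= K)%N -> b m = 0) ->
    \sum_(m < K.+1) b m * h ^+ m = b 0%N.
  move=> K h Hb; rewrite big_ord_recl expr0 mulr1 big1 ?addr0 // => m _.
  by rewrite Hb ?mul0r //= -ltnS ltn_ord.
have Hb : forall K, b 0%N = psi 0 /\ forall m, (0 < m <= K)%N -> b m = 0.
  elim => [|K [IH0 IH]].
    split => [|m]; last by case: m.
    apply/esym/eqP; rewrite -subr_eq0; apply/eqP.
    apply: (@eq0_small _ _ (M / rho) rho r0) => u /andP[u0 ur].
    have hu : `|- u| <= rho by rewrite normrN ger0_norm ltW.
    have H2 : psi (S + - u) = psi 0 by apply: Hneg; [rewrite lerN2 ltW | rewrite oppr_lt0].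
    have := Ht 0%N (- u) hu; rewrite big_ord1 expr0 mulr1 normrN (ger0_norm (ltW u0)) expr1 => H.
    rewrite -H2; apply: le_trans H _; by rewrite mulrA mulrAC.
  split => // m /andP[m0 mK].
  case: (ltngtP m K.+1) => [mlt | | ->]; first by apply: IH; rewrite m0 -ltnS.
    by rewrite ltnNge mK.
  apply: (@eq0_small _ _ (M / rho ^+ K.+2) rho r0) => u /andP[u0 ur].
  have hu : `|- u| <= rho by rewrite normrN ger0_norm ltW.
  have H2 : psi (S + - u) = psi 0 by apply: Hneg; [rewrite lerN2 ltW | rewrite oppr_lt0].
  have := Ht K.+1 (- u) hu; rewrite big_ord_recr /= (sumE K (- u) IH) IH0 H2.
  rewrite opprD addrA subrr sub0r normrN normrM normrX normrN (ger0_norm (ltW u0)) => H1.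
  have uK : 0 < u ^+ K.+1 by rewrite exprn_gt0.
  rewrite -(ler_pM2r uK); apply: le_trans H1 _.
  rewrite le_eqVlt; apply/orP; left; apply/eqP; rewrite expr_div_n exprS; field.
  by rewrite expf_neq0 // gt_eqF.
have Hpos : forall h, 0 <= h <= rho -> psi (S + h) = psi 0.
  move=> h /andP[h0 hr].
  have hh : `|h| <= rho by rewrite ger0_norm.
  have conv := Hc h hh.
  have E : (fun N => \sum_(m < N.+1) b m * h ^+ m) = (fun _ => psi 0).
    apply: funext => N; rewrite (sumE N) //; first by case: (Hb 0%N).
    by move=> m /andP[m0 _]; case: (Hb m) => _ ->; rewrite ?m0 ?leqnn.
  rewrite E in conv.
  have L : lim ((fun _ : nat => psi 0) @ \oo) = psi (S + h) by apply: cvg_lim.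
  by rewrite -L lim_cst.
have Hall : forall s', - x j < s' -> s' <= S + rho -> psi s' = psi 0.
  move=> s' h1 h2; case: (ltP s' S) => [|hSs]; first exact: Hlt.
  have -> : s' = S + (s' - S) by rewrite addrC subrK.
  apply: Hpos; apply/andP; split; lra.
case: (lerP s1 (S + rho)) => [hs | hs].
  by move/eqP: Hne; apply; apply: Hall.
have : A (S + rho).
  split; last exact: Hall.
  apply/andP; split; lra.
move/(sup_upper_bound hA); rewrite -/S; lra.
Qed.


Lemma step3c : (forall t, G t = G 0) -> ~ arcG f i j.
Proof.
move=> HG Ha.
have [C C0 HC] := upperG.
move/cvgryPge: Ha => /(_ (C * G 0 + 1)) Hn.
have [t Ht] := filter_ex Hn.
have := HC t; rewrite HG => H; move: Ht; lra.
Qed.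

Lemma main_sec : arcG f i j <-> Defs.jacobian f x i j != 0.
Proof.
split.
- move=> Ha; apply/negP => /eqP J.
  have H3 := step3a J.
  have Hs0 : forall s, - x j < s -> s <= 0 -> psi s = psi 0.
    move=> s hs s0; rewrite (psi_G s hs) -G0psi; apply: H3.
    apply: ln_le0; suff : s / x j <= 0 by lra.
    by rewrite ler_pdivrMr ?xj0 // mul0r.
  have Hid := ident Hs0.
  apply: (step3c _ Ha) => t; rewrite G_psi G0psi; apply: Hid.
  rewrite mulrBr mulr1 ltrBrDl subrr; by rewrite mulr_gt0 ?xj0 ?expR_gt0.
- move=> J; have [t1 [t10 Gt]] := step2a J; exact: (step2b t1 t10 Gt).
Qed.

End Main.

Theorem lemma4p9 (R : realType) (n : nat) (f : ('I_n -> R) -> ('I_n -> R)) :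
  (forall x, pos_vec x -> pos_vec (f x)) ->
  order_preserving f -> homogeneous f -> real_analytic f -> mult_convex f ->
  forall x, pos_vec x -> forall i j : 'I_n, arcG f i j <-> arcJ f x i j.
Proof.
move=> fpos fop fhom fan fmc x xpos i j.
rewrite /arcJ; apply: main_sec; assumption.
Qed.
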